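(* Suppose the GAPs lie in $\mathbf{Q}^+$. Then in the Com-IC model, for any fixed seed sets $S_\mathcal{A},S_\mathcal{B}$, $\sigma_\mathcal{A}(S_\mathcal{A},S_\mathcal{B})$ is monotonically non-decreasing in each of $q_{\mathcal{A}|\emptyset},q_{\mathcal{A}|\mathcal{B}},q_{\mathcal{B}|\emptyset},q_{\mathcal{B}|\mathcal{A}}$ when the other three GAPs are held fixed, as long as the modified GAP vector still lies in $\mathbf{Q}^+$.
   Context: Com-IC model. Let $G=(V,E,p)$ be a directed graph with $p:E\to[0,1]$ and $N^-(v)$ the in-neighbours of $v$. Two items $\mathcal{A},\mathcal{B}$; GAPs $\mathbf{Q}=(q_{\mathcal{A}|\emptyset},q_{\mathcal{A}|\mathcal{B}},q_{\mathcal{B}|\emptyset},q_{\mathcal{B}|\mathcal{A}})\in[0,1]^4$. Given seed sets $S_\mathcal{A},S_\mathcal{B}\subseteq V$, randomness: each edge $(u,v)$ independently live w.p. $p(u,v)$; each node $v$ independently draws $\alpha^v_\mathcal{A},\alpha^v_\mathcal{B}$ uniform on $[0,1]$, a uniformly random permutation $\pi_v$ of $N^-(v)$, and a fair coin $\tau_v\in\{\mathcal{A},\mathcal{B}\}$. For each item $X$ each node is $X$-idle, $X$-suspended, $X$-adopted or $X$-rejected; initially all idle. At step $0$ nodes of $S_\mathcal{A}$ become $\mathcal{A}$-adopted and nodes of $S_\mathcal{B}$ become $\mathcal{B}$-adopted (order for nodes in both given by $\tau_v$). At step $t\ge1$, $v$ is informed of $X$ by in-neighbour $u$ if $(u,v)$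 is live and $u$ adopted $X$ at step $t-1$; informing in-neighbours are processed in order $\pi_v$ (an in-neighbour that adopted both items is processed for both, in its adoption order). When $v$ is informed of $X$ ($Y$ the other item) while $X$-idle: if $Y$-adopted, $v$ becomes $X$-adopted if $\alpha^v_X\le q_{X|Y}$, else $X$-rejected; otherwise $X$-adopted if $\alpha^v_X\le q_{X|\emptyset}$, else $X$-suspended. Informing a non-$X$-idle node of $X$ has no effect. Reconsideration: when an $X$-suspended node becomes $Y$-adopted, it becomes $X$-adopted if $\alpha^v_X\le q_{X|Y}$, else $X$-rejected. The process stops when nothing changes. $\sigma_\mathcal{A}(S_\mathcal{A},S_\mathcal{B})$ is the expected final number of $\mathcal{A}$-adopted nodes. $\mathbf{Q}^+$: $q_{\mathcal{A}|\emptyset}\le q_{\mathcal{A}|\mathcal{B}}$ and $q_{\mathcal{B}|\emptyset}\le q_{\mathcal{B}|\mathcal{A}}$. *)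

(* Defs.v *)
From HB Require Import structures.
From mathcomp Require Import all_boot all_order all_algebra all_fingroup.
Set Implicit Arguments. Unset Strict Implicit. Unset Printing Implicit Defensive.
Import Order.TTheory GRing.Theory Num.Theory.
Local Open Scope ring_scope.

(* Items are booleans: true = item A, false = item B; ~~ X is the other item. *)
Definition itemA : bool := true.
Definition itemB : bool := false.

(* Per-item state of a node; [Adopt t] = adopted at step t. *)
Inductive status := Idle | Susp | Adopt of nat | Rej.

Definition is_adopted (s : status) : bool := if s is Adopt _ then true else false.
Definition adopted_at (t : nat) (s : status) : bool :=
  if s is Adopt t' then t' == t else false.

(* GAP vector: [Q X false] = q_{X|emptyset}, [Q X true] = q_{X|other item}. *)
Definition GAP (R : realFieldType) := bool -> bool -> R.

Definition GAP_in01 (R : realFieldType) (Q : GAP R) : Prop :=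
  forall X c, 0 <= Q X c <= 1.

Definition Qplus (R : realFieldType) (Q : GAP R) : Prop :=
  Q itemA false <= Q itemA true /\ Q itemB false <= Q itemB true.

(* Node-local state: per-item status and the sequence of items in adoption order. *)
Record nstate := NState { nst : bool -> status; nord : seq bool }.

Definition upd (f : bool -> status) (X : bool) (s : status) : bool -> status :=
  fun Y => if Y == X then s else f Y.

Section ComIC.
Variables (R : realFieldType) (V : finType).

(* The uniform variable alpha^v_X only matters through the two events
   alpha <= q_{X|0} and alpha <= q_{X|Y}.  We record which of the three intervals
   [0,min], (min,max], (max,1] of the thresholds it falls in ("region"). *)
Definition alpha_le (Q : GAP R) (X c : bool) (r : 'I_3) : bool :=
  (val r == 0%N) ||
  ((val r == 1%N) && (if c then Q X false < Q X true else Q X true < Q X false)).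

Definition region_w (Q : GAP R) (X : bool) (r : 'I_3) : R :=
  let a := Q X false in let b := Q X true in
  if val r == 0%N then Num.min a b
  else if val r == 1%N then `|a - b|
  else 1 - Num.max a b.

Definition adopt (Q : GAP R) (rg : bool -> 'I_3) (t : nat) (ns : nstate) (X : bool)
  : nstate :=
  let f := upd (nst ns) X (Adopt t) in
  let o := rcons (nord ns) X in
  if f (~~ X) is Susp then
    if alpha_le Q (~~ X) true (rg (~~ X))
    then NState (upd f (~~ X) (Adopt t)) (rcons o (~~ X))
    else NState (upd f (~~ X) Rej) o
  else NState f o.

Definition inform (Q : GAP R) (rg : bool -> 'I_3) (t : nat) (ns : nstate) (X : bool)
  : nstate :=
  match nst ns X with
  | Idle =>
      if is_adopted (nst ns (~~ X)) then
        (if alpha_le Q X true (rg X) then adopt Q rg t ns X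
         else NState (upd (nst ns) X Rej) (nord ns))
      else
        (if alpha_le Q X false (rg X) then adopt Q rg t ns X
         else NState (upd (nst ns) X Susp) (nord ns))
  | _ => ns
  end.

(* Step 0: seeds; tau v = true means A is adopted first. *)
Definition init (SA SB : {set V}) (tau : V -> bool) : V -> nstate := fun v =>
  let inA := v \in SA in let inB := v \in SB in
  NState (fun X => if (if X then inA else inB) then Adopt 0 else Idle)
         (if inA && inB then (if tau v then [:: true; false] else [:: false; true])
          else if inA then [:: true] else if inB then [:: false] else [::]).

(* Step t >= 1.  In-neighbours are processed in the order given by the random
   permutation pi v of V (restricted to the live in-neighbours); an in-neighbour
   that adopted both items at t-1 is processed for both, in its adoption order. *)
Definition step (E : rel V) (live : V * V -> bool) (pi : V -> {perm V})
  (Q : GAP R) (rgn : V -> bool -> 'I_3) (t : nat) (g : V -> nstate) : V -> nstate :=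
  fun v =>
  let informers := [seq u <- map (pi v) (enum V) | E u v && live (u, v)] in
  let events := flatten [seq [seq X <- nord (g u) | adopted_at t.-1 (nst (g u) X)]
                        | u <- informers] in
  foldl (inform Q (rgn v) t) (g v) events.

Fixpoint run E live pi Q rgn (n : nat) (g : V -> nstate) : V -> nstate :=
  match n with
  | 0 => g
  | n'.+1 => step E live pi Q rgn n'.+1 (run E live pi Q rgn n' g)
  end.

(* Sample space: live-edge indicators, alpha regions, permutations, coins. *)
Definition omega : finType :=
  ({ffun V * V -> bool} * {ffun V * bool -> 'I_3} * {ffun V -> {perm V}}
   * {ffun V -> bool})%type.

(* Final state: no change can occur after 2|V|+2 steps (each of the at most
   2|V| adoptions needs an adoption at the previous step), so this is the
   state at which the process stops. *)
Definition final (E : rel V) (Q : GAP R) (SA SB : {set V}) (w : omega)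
  : V -> nstate :=
  let: (L, Rg, Pi, Tau) := w in
  run E (fun e => L e) (fun v => Pi v) Q (fun v X => Rg (v, X))
      (2 * #|V|).+2 (init SA SB (fun v => Tau v)).

Definition weight (E : rel V) (p : V -> V -> R) (Q : GAP R) (w : omega) : R :=
  let: (L, Rg, Pi, Tau) := w in
  (\prod_(e : V * V)
     (if E e.1 e.2 then (if L e then p e.1 e.2 else 1 - p e.1 e.2)
      else (if L e then 0 else 1)))
  * (\prod_(x : V * bool) region_w Q x.2 (Rg x))
  * (\prod_(v : V) ((#|V|`!)%:R)^-1)
  * (\prod_(v : V) 2^-1).

Definition sigmaA (E : rel V) (p : V -> V -> R) (Q : GAP R) (SA SB : {set V}) : R :=
  \sum_(w : omega)
    weight E p Q w * (#|[set v | is_adopted (nst (final E Q SA SB w v) itemA)]|)%:R.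

End ComIC.

(* Main.v *)
Require Import Defs.
From HB Require Import structures.
From mathcomp Require Import all_boot all_order all_algebra all_fingroup.
From mathcomp Require Import zify ring lra.
From Stdlib Require FunctionalExtensionality.
Set Implicit Arguments. Unset Strict Implicit. Unset Printing Implicit Defensive.
Import Order.TTheory GRing.Theory Num.Theory.
Local Open Scope ring_scope.
Section Dyn.
Variables (R : realFieldType) (Q : GAP R) (rg : bool -> 'I_3) (t : nat).

Definition icond (s : nstate) (Y : bool) : bool :=
  alpha_le Q Y (is_adopted (nst s (~~ Y))) (rg Y).

Lemma inform_spec s Y Z :
  nst (inform Q rg t s Y) Z =
  if nst s Y is Idle then
    if Z == Y then (if icond s Y then Adopt t
                    else if is_adopted (nst s (~~ Y)) then Rej else Susp)
    else if icond s Y && (if nst s (~~ Y) is Susp then true else false) then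
           (if alpha_le Q (~~ Y) true (rg (~~ Y)) then Adopt t else Rej)
         else nst s Z
  else nst s Z.
Proof.
case: s => f o; rewrite /inform /adopt /upd /icond /=.
case: Y Z => -[] /=; case Et: (f true) => [| |?|]; case Ef: (f false) => [| |?|] //=;
  by repeat (case: ifP => //=; rewrite ?Et ?Ef //=).
Qed.

Definition la Z := alpha_le Q Z false (rg Z).
Definition lb Z := alpha_le Q Z true (rg Z).

Definition Iloc (s : nstate) : Prop :=
  [/\ forall Z, is_adopted (nst s Z) -> Z \in nord s,
      forall Z, nst s Z = Rej -> ~~ lb Z &
      forall Z, nst s Z = Susp -> ~~ la Z && ~~ is_adopted (nst s (~~ Z))].

Lemma nst_eta (f : bool -> status) : f = fun b => if b then f true else f false.
Proof. by apply: FunctionalExtensionality.functional_extensionality => -[]. Qed.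

Ltac fin_tac :=
  match goal with
  | |- is_true (_ -> _) => fail
  | |- _ -> _ => let h := fresh in move=> h; (try discriminate); fin_tac
  | _ => by rewrite ?mem_rcons ?in_cons /= ?orbT //
  end.

Lemma inform_Iloc s Y : Iloc s -> Iloc (inform Q rg t s Y).
Proof.
case: s => f o; rewrite (nst_eta f); move: (f true) (f false) => x y.
rewrite /Iloc /la /lb => -[H1 H2 H3].
move: (H1 true) (H1 false) (H2 true) (H2 false) (H3 true) (H3 false) => /=; clear H1 H2 H3.
rewrite /inform /adopt /upd /=.
case: Y; case: x => [| |?|]; case: y => [| |?|]; rewrite /= => A1 A2 B1 B2 C1 C2;
split => -[]; move: A1 A2 B1 B2 C1 C2 => /=;
case: (alpha_le Q true false (rg true)); case: (alpha_le Q true true (rg true));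
case: (alpha_le Q false false (rg false)); case: (alpha_le Q false true (rg false));
rewrite /= => A1 A2 B1 B2 C1 C2 //; rewrite ?mem_rcons ?in_cons /=.
all: try (move=> _; rewrite ?A1 ?A2 ?orbT //).
all: try (move=> Hx; by move: (B1 Hx) (B2 Hx) (C1 Hx) (C2 Hx)).
all: by rewrite mem_rcons mem_head.
Qed.

Lemma negb_neq (X Y : bool) : X != Y -> X = ~~ Y.
Proof. by case: X; case: Y. Qed.

Lemma inform_adopt_keep s Y X t' :
  nst s X = Adopt t' -> nst (inform Q rg t s Y) X = Adopt t'.
Proof.
move=> H; rewrite inform_spec; case EY: (nst s Y) => //.
case: eqP => [eXY|/eqP nXY]; first by move: EY; rewrite -eXY H.
by rewrite -(negb_neq nXY) H andbF.
Qed.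

Lemma inform_nonidle_keep s Y X :
  nst s X <> Idle -> nst (inform Q rg t s Y) X <> Idle.
Proof.
move=> H; rewrite inform_spec; case EY: (nst s Y) => //.
case: eqP => [eXY|/eqP nXY]; first by move: H; rewrite eXY EY.
rewrite -(negb_neq nXY); case: ifP => // _; by case: ifP.
Qed.

Lemma inform_hit s Y : nst (inform Q rg t s Y) Y <> Idle.
Proof.
rewrite inform_spec eqxx; case EY: (nst s Y) => //; by repeat case: ifP.
Qed.

Lemma inform_new s Y X t' :
  nst (inform Q rg t s Y) X = Adopt t' -> nst s X = Adopt t' \/ t' = t.
Proof.
rewrite inform_spec; case EY: (nst s Y) => [| |?|]; try by left.
case: eqP => [eXY|/eqP nXY].
  by repeat case: ifP => //; move=> *; right; congruence.
case: ifP => _; last by left.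
by case: ifP => // _ [->]; right.
Qed.

Lemma inform_Iin (P : bool -> bool) (W : bool -> Prop) s Y :
  (forall Z, W Z -> la Z || (P (~~ Z) && lb Z) -> P Z) -> W Y ->
  (forall Z, (is_adopted (nst s Z) -> P Z) /\ (nst s Z = Susp -> W Z)) ->
  (forall Z, (is_adopted (nst (inform Q rg t s Y) Z) -> P Z) /\
             (nst (inform Q rg t s Y) Z = Susp -> W Z)).
Proof.
move=> HP WY Hs Z; rewrite inform_spec.
case EY: (nst s Y) => [| |?|]; try exact: Hs.
have cP : icond s Y -> P Y.
  rewrite /icond => c; apply: HP => //.
  move: c; case: (boolP (is_adopted _)) => ad c; first by rewrite /lb c (proj1 (Hs _) ad) orbT.
  by rewrite /la c.
case: eqP => [->|/eqP nXY].
  split; first by case: ifP => [c _|_]; [exact: cP | case: ifP].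
  by case: ifP => // _; case: ifP.
have eZ := negb_neq nXY; subst Z.
case: ifP => [/andP[c hs]|_]; last exact: Hs.
case ES: (nst s (~~ Y)) hs => // _.
split=> //; case: ifP => // hl _; apply: HP.
  exact: (proj2 (Hs _) ES).
by rewrite negbK cP // /lb hl orbT.
Qed.
End Dyn.

Section Lfp.
Variables (V : finType) (ell : rel V) (la lb : V -> bool -> bool) (SA SB : {set V}).

Definition selS (X : bool) (A B : {set V}) := if X then A else B.

Definition Tcond (AB : {set V} * {set V}) v X :=
  (v \in selS X SA SB) ||
  ([exists u, ell u v && (u \in selS X AB.1 AB.2)] &&
   (la v X || ((v \in selS (~~ X) AB.1 AB.2) && lb v X))).

Definition prefixed AB :=
  [forall v, [forall X, Tcond AB v X ==> (v \in selS X AB.1 AB.2)]].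

Definition lfpS X :=
  [set v | [forall AB, prefixed AB ==> (v \in selS X AB.1 AB.2)]].

Lemma prefixedP AB :
  reflect (forall v X, Tcond AB v X -> v \in selS X AB.1 AB.2) (prefixed AB).
Proof.
apply: (iffP forallP) => [H v X T|H v]; first by move/forallP: (H v) => /(_ X)/implyP; apply.
by apply/forallP => X; apply/implyP; apply: H.
Qed.

Lemma lfp_eq (F : bool -> {set V}) :
  prefixed (F true, F false) ->
  (forall AB, prefixed AB -> forall X, F X \subset selS X AB.1 AB.2) ->
  forall X, lfpS X = F X.
Proof.
move=> pF Fsub X; apply/setP => v; rewrite inE; apply/forallP/idP.
  by move/(_ (F true, F false))/implyP/(_ pF); case: X.
move=> vF AB; apply/implyP => pAB; exact: (subsetP (Fsub AB pAB X)).
Qed.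
End Lfp.

Lemma lfp_mono (V : finType) (ell : rel V) (la lb la' lb' : V -> bool -> bool) SA SB X :
  (forall v Y, la v Y -> la' v Y) -> (forall v Y, lb v Y -> lb' v Y) ->
  lfpS ell la lb SA SB X \subset lfpS ell la' lb' SA SB X.
Proof.
move=> Ha Hb; apply/subsetP => v; rewrite !inE => /forallP H; apply/forallP => AB.
apply/implyP => pAB; apply: (implyP (H AB)); apply/prefixedP => w Y T.
apply: (prefixedP _ _ _ _ _ _ pAB).
move: T; rewrite /Tcond; case/orP=> [->//|/andP[-> /orP[/Ha ->|/andP[-> /Hb ->]]]];
  by rewrite ?orbT.
Qed.

Lemma foldl_ind (R : realFieldType) (Q : GAP R) rg t (P : nstate -> Prop) evs s :
  P s -> (forall s' Y, Y \in evs -> P s' -> P (inform Q rg t s' Y)) ->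
  P (foldl (inform Q rg t) s evs).
Proof.
elim: evs s => [|Y evs IH] s Ps H //=; apply: IH; last first.
  by move=> s' Z Zin; apply: H; rewrite in_cons Zin orbT.
by apply: H => //; rewrite mem_head.
Qed.

Lemma foldl_hit (R : realFieldType) (Q : GAP R) rg t evs s Y :
  Y \in evs -> nst (foldl (inform Q rg t) s evs) Y <> Idle.
Proof.
elim: evs s => [|Z evs IH] s //=; rewrite in_cons => /orP[/eqP->|/IH //].
apply: (foldl_ind (P := fun s => nst s Z <> Idle)); first exact: inform_hit.
by move=> s' Y' _; apply: inform_nonidle_keep.
Qed.

Lemma adopted_atE t s : adopted_at t s -> s = Adopt t.
Proof. by case: s => //= t' /eqP->. Qed.

Section Global.
Variables (R : realFieldType) (V : finType) (E : rel V) (live : V * V -> bool)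
  (pi : V -> {perm V}) (Q : GAP R) (rgn : V -> bool -> 'I_3)
  (SA SB : {set V}) (tau : V -> bool).

Definition ell u v := E u v && live (u, v).
Definition g_ n := run E live pi Q rgn n (init SA SB tau).

Definition events (g : V -> nstate) t v :=
  flatten [seq [seq X <- nord (g u) | adopted_at t.-1 (nst (g u) X)]
          | u <- [seq u <- map (pi v) (enum V) | E u v && live (u, v)]].

Lemma stepE t g v :
  step E live pi Q rgn t g v = foldl (inform Q (rgn v) t) (g v) (events g t v).
Proof. by []. Qed.

Lemma gS n : g_ n.+1 = step E live pi Q rgn n.+1 (g_ n).
Proof. by []. Qed.

Lemma mem_eventsP g t v X :
  X \in events g t v ->
  exists u, [/\ ell u v, X \in nord (g u) & adopted_at t.-1 (nst (g u) X)].
Proof.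
case/flattenP=> s /mapP[u]; rewrite mem_filter => /andP[Huv _] -> {s}.
by rewrite mem_filter => /andP[a b]; exists u.
Qed.

Lemma mem_eventsI g t v X u :
  ell u v -> X \in nord (g u) -> adopted_at t.-1 (nst (g u) X) ->
  X \in events g t v.
Proof.
move=> Huv Xn Xa; apply/flattenP; exists [seq X <- nord (g u) | adopted_at t.-1 (nst (g u) X)].
  apply/mapP; exists u => //; rewrite mem_filter; apply/andP; split; first exact: Huv.
  by apply/mapP; exists ((pi v)^-1 u)%g; rewrite ?mem_enum // permKV.
by rewrite mem_filter Xa Xn.
Qed.

Lemma step_adopt_keep g t v X t' :
  nst (g v) X = Adopt t' -> nst (step E live pi Q rgn t g v) X = Adopt t'.
Proof.
move=> H; rewrite stepE; apply: (foldl_ind (P := fun s => nst s X = Adopt t')) => //.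
by move=> s Y _; apply: inform_adopt_keep.
Qed.

Lemma step_nonidle_keep g t v X :
  nst (g v) X <> Idle -> nst (step E live pi Q rgn t g v) X <> Idle.
Proof.
move=> H; rewrite stepE; apply: (foldl_ind (P := fun s => nst s X <> Idle)) => //.
by move=> s Y _; apply: inform_nonidle_keep.
Qed.

Lemma step_new g t v X t' :
  nst (step E live pi Q rgn t g v) X = Adopt t' ->
  nst (g v) X = Adopt t' \/ (t' = t /\ exists u Y, nst (g u) Y = Adopt t.-1).
Proof.
rewrite stepE; move: X t'.
apply: (foldl_ind (P := fun s => forall X t', nst s X = Adopt t' ->
   nst (g v) X = Adopt t' \/ (t' = t /\ exists u Y, nst (g u) Y = Adopt t.-1))).
  by move=> X t' ->; left.
move=> s Y Yin IH X t' /inform_new [/IH //|->]; right; split => //.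
case/mem_eventsP: Yin => u [_ _ /adopted_atE H]; by exists u, Y.
Qed.

Lemma init_adopt v X t' : nst (init SA SB tau v) X = Adopt t' -> t' = 0%N.
Proof. by rewrite /init /=; case: ifP => // _ [<-]. Qed.

Lemma g_time n v X t' :
  nst (g_ n v) X = Adopt t' ->
  (t' <= n)%N /\ ((0 < t')%N -> exists u Y, nst (g_ n u) Y = Adopt t'.-1).
Proof.
elim: n v X t' => [|n IH] v X t'; first by move/init_adopt ->.
rewrite gS => /step_new [/IH [le H]|[-> [u [Y HY]]]].
  split; first exact: leqW.
  by move=> /H [u [Y HY]]; exists u, Y; apply: step_adopt_keep.
by split => // _; exists u, Y; apply: step_adopt_keep.
Qed.

Lemma g_back m k v X t' :
  (k <= m)%N -> (t' <= k)%N -> nst (g_ m v) X = Adopt t' -> nst (g_ k v) X = Adopt t'.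
Proof.
elim: m k => [|m IH] k; first by rewrite leqn0 => /eqP->.
rewrite leq_eqVlt => /orP[/eqP->//|km] tk.
rewrite gS => /step_new [H|[e _]]; first exact: IH.
by move: tk km; rewrite e => /leq_ltn_trans H /H; rewrite ltnn.
Qed.

Lemma g_adopt_fwd k m v X t' :
  (k <= m)%N -> nst (g_ k v) X = Adopt t' -> nst (g_ m v) X = Adopt t'.
Proof.
move=> /subnK <-; elim: (m - k)%N => [//|d IH] H.
by rewrite addSn gS; apply: step_adopt_keep; apply: IH.
Qed.

Lemma g_nonidle_fwd k m v X :
  (k <= m)%N -> nst (g_ k v) X <> Idle -> nst (g_ m v) X <> Idle.
Proof.
move=> /subnK <-; elim: (m - k)%N => [//|d IH] H.
by rewrite addSn gS; apply: step_nonidle_keep; apply: IH.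
Qed.

Lemma g_Iloc n v : Iloc Q (rgn v) (g_ n v).
Proof.
elim: n v => [|n IH] v.
  rewrite /g_ /= /init /Iloc /=; case: (v \in SA); case: (v \in SB); case: (tau v);
  by split => -[].
rewrite gS stepE; apply: foldl_ind => // s Y _; exact: inform_Iloc.
Qed.


Lemma g_time_bound n u X t0 :
  nst (g_ n u) X = Adopt t0 -> (t0.+1 <= 2 * #|V|)%N.
Proof.
move=> H.
have down : forall d, (d <= t0)%N ->
    exists p : V * bool, adopted_at (t0 - d) (nst (g_ n p.1) p.2).
  elim=> [|d IH] hd; first by exists (u, X); rewrite subn0 H /=.
  case: (IH (ltnW hd)) => p /adopted_atE Hp.
  have : (0 < t0 - d)%N by rewrite subn_gt0.
  case/(proj2 (g_time Hp)) => w [Y HY]; exists (w, Y); by rewrite /= HY /= subnS eqxx.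
have ex : forall i : 'I_t0.+1, exists p : V * bool, adopted_at i (nst (g_ n p.1) p.2).
  move=> i; have := down (t0 - i)%N (leq_subr _ _); rewrite subKn //.
  by rewrite -ltnS ltn_ord.
pose f (i : 'I_t0.+1) := odflt (u, X) [pick p | adopted_at i (nst (g_ n p.1) p.2)].
have fP : forall i : 'I_t0.+1, adopted_at i (nst (g_ n (f i).1) (f i).2).
  move=> i; rewrite /f; case: pickP => [p //|/= none].
  by case: (ex i) => p; rewrite none.
have finj : injective f.
  move=> i j e; have := fP i; rewrite e; move: (fP j).
  by case: (nst _ _) => //= t /eqP-> /eqP /val_inj.
by have := @leq_card _ _ f finj; rewrite card_ord card_prod card_bool mulnC.
Qed.

Definition la_ v := la Q (rgn v).
Definition lb_ v := lb Q (rgn v).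

Lemma g_sub AB n : prefixed ell la_ lb_ SA SB AB ->
  forall v Z, (is_adopted (nst (g_ n v) Z) -> v \in selS Z AB.1 AB.2) /\
              (nst (g_ n v) Z = Susp -> exists u, ell u v /\ u \in selS Z AB.1 AB.2).
Proof.
move=> /prefixedP pAB; elim: n => [|n IH] v.
  move=> Z; rewrite /g_ /= /init /=; split; last by case: ifP.
  case: ifP => // hs _; apply: pAB; rewrite /Tcond.
  by case: Z hs => /= ->.
rewrite gS stepE; apply: (foldl_ind (P := fun s => forall Z,
  (is_adopted (nst s Z) -> v \in selS Z AB.1 AB.2) /\
  (nst s Z = Susp -> exists u, ell u v /\ u \in selS Z AB.1 AB.2))); first exact: IH.
move=> s Y Yin Hs; apply: (@inform_Iin _ _ _ _ (fun Z => v \in selS Z AB.1 AB.2)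
   (fun Z => exists u, ell u v /\ u \in selS Z AB.1 AB.2)) => //.
  move=> Z [u [uv uin]] c; apply: pAB; rewrite /Tcond; apply/orP; right.
  rewrite /la_ /lb_ c andbT; apply/existsP; exists u; by rewrite uv.
case/mem_eventsP: Yin => u [uv _ /adopted_atE ad]; exists u; split => //.
by apply: (proj1 (IH u Y)); rewrite ad.
Qed.

Definition Nf := (2 * #|V|).+2.
Definition Ff X := [set v | is_adopted (nst (g_ Nf v) X)].

Lemma selF X : selS X (Ff true) (Ff false) = Ff X.
Proof. by case: X. Qed.

Hypothesis hlab : forall v Z, la_ v Z -> lb_ v Z.

Lemma Ff_prefixed : prefixed ell la_ lb_ SA SB (Ff true, Ff false).
Proof.
apply/prefixedP => v X; rewrite /Tcond /= !selF.
case/orP => [hs|/andP[/existsP[u /andP[uv]] uF cond]].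
  rewrite inE; have := @g_adopt_fwd 0 Nf v X 0 (leq0n _).
  rewrite /g_ /= /init; case: X hs => /= -> /(_ erefl) -> //.
move: uF; rewrite inE; case Eu: (nst _ _) => [| |t0|] //= _.
have tb := g_time_bound Eu.
have Eu0 : nst (g_ t0 u) X = Adopt t0 by apply: (g_back _ _ Eu) => //; rewrite /Nf; lia.
have Xn : X \in nord (g_ t0 u).
  by case: (g_Iloc t0 u) => H1 _ _; apply: H1; rewrite Eu0.
have hit : nst (g_ t0.+1 v) X <> Idle.
  rewrite gS stepE; apply: foldl_hit; apply: (mem_eventsI (u := u)) => //=.
  by rewrite Eu0 /=.
have := g_nonidle_fwd (m := Nf) _ hit; rewrite /Nf => /(_ ltac:(lia)).
rewrite inE; case: (g_Iloc Nf v) => _ H2 H3.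
case Ev: (nst _ _) => [| |?|] //= _.
  move: (H3 X Ev) cond; rewrite inE /la_ /lb_.
  by case: (la Q (rgn v) X) => //=; case: (is_adopted _).
move: (H2 X Ev) cond.
by move=> nlb /orP[/hlab|/andP[_]]; rewrite /lb_ (negbTE nlb).
Qed.

Lemma final_char X : lfpS ell la_ lb_ SA SB X = Ff X.
Proof.
apply: lfp_eq; first exact: Ff_prefixed.
move=> AB pAB Y; apply/subsetP => v; rewrite inE => ad.
exact: (proj1 (g_sub Nf pAB v Y) ad).
Qed.
End Global.

Section Prob.
Variables (R : realFieldType) (I : finType).
Variable F : (I -> bool) -> (I -> bool) -> R.
Hypothesis Fmono : forall x y x' y' : I -> bool, (forall i, x i -> x' i) -> (forall i, y i -> y' i) ->
  F x y <= F x' y'.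

Lemma Fext (x y x' y' : I -> bool) : (forall i, x i = x' i) -> (forall i, y i = y' i) -> F x y = F x' y'.
Proof.
move=> ex ey; apply/eqP; rewrite eq_le !Fmono // => i; by rewrite ?ex ?ey.
Qed.

Definition rw (a b : R) (r : 'I_3) : R :=
  if val r == 0%N then Num.min a b else if val r == 1%N then `|a - b|
  else 1 - Num.max a b.

Definition decA (Rg : {ffun I -> 'I_3}) := fun i => val (Rg i) == 0%N.
Definition decB (a b : I -> R) (Rg : {ffun I -> 'I_3}) := fun i =>
  (val (Rg i) == 0%N) || ((val (Rg i) == 1%N) && (a i < b i)).

Definition Phi (a b : I -> R) :=
  \sum_(Rg : {ffun I -> 'I_3}) (\prod_i rw (a i) (b i) (Rg i)) * F (decA Rg) (decB a b Rg).

Definition valid (a b : I -> R) := forall i, 0 <= a i /\ a i <= b i /\ b i <= 1.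

Lemma rw_ge0 a b r : 0 <= a -> a <= b -> b <= 1 -> 0 <= rw a b r.
Proof.
move=> a0 ab b1; rewrite /rw; case: ifP => _; first by rewrite (min_idPl ab).
case: ifP => _; first exact: normr_ge0.
by rewrite (max_idPr ab) subr_ge0.
Qed.

Definition r0 : 'I_3 := @Ordinal 3 0 erefl.
Definition r1 : 'I_3 := @Ordinal 3 1 erefl.
Definition r2 : 'I_3 := @Ordinal 3 2 erefl.

Lemma sum3 (g : 'I_3 -> R) : \sum_(r < 3) g r = g r0 + g r1 + g r2.
Proof.
rewrite !big_ord_recl big_ord0 addr0 addrA; congr (_ + _ + _); apply: congr1; exact: val_inj.
Qed.

Definition setf (Rg : {ffun I -> 'I_3}) i0 r : {ffun I -> 'I_3} :=
  [ffun i => if i == i0 then r else Rg i].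

Lemma Phi_split a b i0 :
  Phi a b = \sum_(Rg : {ffun I -> 'I_3} | Rg i0 == r0) \sum_(r < 3)
     (\prod_i rw (a i) (b i) (setf Rg i0 r i)) *
      F (decA (setf Rg i0 r)) (decB a b (setf Rg i0 r)).
Proof.
rewrite /Phi (partition_big (fun Rg : {ffun I -> 'I_3} => Rg i0) xpredT) //=.
rewrite exchange_big /=; apply: eq_bigr => r _.
rewrite (reindex_onto (fun Rg => setf Rg i0 r) (fun Rg => setf Rg i0 r0)) /=.
  apply: eq_bigl => Rg; rewrite /setf ffunE !eqxx /=.
  apply/eqP/eqP => [e|e]; first by rewrite -e ffunE eqxx.
  by apply/ffunP => i; rewrite !ffunE; case: eqP => // ->.
move=> Rg /eqP e; apply/ffunP => i; rewrite /setf !ffunE; case: eqP => // ->.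
by rewrite e.
Qed.

Lemma key (a b a' b' H0 H1 H2 : R) :
  0 <= a -> a <= b -> a' <= b' -> a <= a' -> b <= b' -> H1 <= H0 -> H2 <= H1 ->
  a * H0 + `|a - b| * (if a < b then H1 else H2) + (1 - b) * H2 <=
  a' * H0 + `|a' - b'| * (if a' < b' then H1 else H2) + (1 - b') * H2.
Proof.
move=> a0 ab ab' aa bb h1 h2.
have n1 : `|a - b| = b - a by rewrite distrC ger0_norm // subr_ge0.
have n2 : `|a' - b'| = b' - a' by rewrite distrC ger0_norm // subr_ge0.
rewrite n1 n2.
have k1 : 0 <= (a' - a) * (H0 - H1) by apply: mulr_ge0; rewrite subr_ge0.
have k2 : 0 <= (b' - b) * (H1 - H2) by apply: mulr_ge0; rewrite subr_ge0.
case: ltP => l1; case: ltP => l2.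
- nra.
- have e : a' = b' by apply/eqP; rewrite eq_le ab' l2.
  subst; nra.
- have e : a = b by apply/eqP; rewrite eq_le ab l1.
  subst; nra.
- have e : a = b by apply/eqP; rewrite eq_le ab l1.
  have e' : a' = b' by apply/eqP; rewrite eq_le ab' l2.
  subst; nra.
Qed.

Lemma Phi_single a b a' b' i0 : valid a b -> valid a' b' ->
  (forall i, i != i0 -> a' i = a i /\ b' i = b i) -> a i0 <= a' i0 -> b i0 <= b' i0 ->
  Phi a b <= Phi a' b'.
Proof.
move=> va va' H aa bb.
rewrite (Phi_split a b i0) (Phi_split a' b' i0); apply: ler_sum => Rg _.
have prodE : forall (c d : I -> R) r, \prod_i rw (c i) (d i) (setf Rg i0 r i) =
    rw (c i0) (d i0) r * \prod_(i | i != i0) rw (c i) (d i) (Rg i).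
  move=> c d r; rewrite (bigD1 i0) //= /setf ffunE eqxx; congr (_ * _).
  by apply: eq_bigr => i /negPf ne; rewrite ffunE ne.
set C := \prod_(i | i != i0) rw (a i) (b i) (Rg i).
have C' : \prod_(i | i != i0) rw (a' i) (b' i) (Rg i) = C.
  by apply: eq_bigr => i /H [-> ->].
have C0 : 0 <= C.
  by apply: prodr_ge0 => i _; case: (va i) => [x [y z]]; apply: rw_ge0.
pose G x y := F (fun i => if i == i0 then x else decA Rg i)
                (fun i => if i == i0 then y else decB a b Rg i).
have FE : forall (c d : I -> R), (forall i, i != i0 -> c i = a i /\ d i = b i) ->
  forall r, F (decA (setf Rg i0 r)) (decB c d (setf Rg i0 r)) =
    G (val r == 0%N) ((val r == 0%N) || ((val r == 1%N) && (c i0 < d i0))).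
  move=> c d Hcd r; apply: Fext => i; rewrite /decA /decB /setf ffunE;
    (case: (boolP (i == i0)) => [/eqP ei|ne]; first by subst i); rewrite //=.
  by case: (Hcd i ne) => -> ->.
rewrite !sum3 !prodE C' !FE //.
have E1 : forall x y : R, x * C * y = C * (x * y) by move=> x y; ring.
rewrite !E1 -!mulrDr; apply: ler_wpM2l => //.
rewrite /rw /=.
case: (va i0) => [a0 [ab b1]]; case: (va' i0) => [a0' [ab' b1']].
rewrite (min_idPl ab) (min_idPl ab') (max_idPr ab) (max_idPr ab').
rewrite (_ : (0%N == 0%N) = true) // (_ : (1%N == 0%N) = false) //
  (_ : (2%N == 0%N) = false) //.
have gen : forall p : bool, G false p = if p then G false true else G false false.
  by case.
rewrite [G false (a i0 < b i0)]gen [G false (a' i0 < b' i0)]gen.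
apply: key => //; apply: Fmono => i //; case: ifP => //.
Qed.

Lemma Phi_mono a b a' b' : valid a b -> valid a' b' ->
  (forall i, a i <= a' i) -> (forall i, b i <= b' i) -> Phi a b <= Phi a' b'.
Proof.
move=> va va' aa bb.
pose am (s : seq I) i := if i \in s then a' i else a i.
pose bm (s : seq I) i := if i \in s then b' i else b i.
have vm : forall s, valid (am s) (bm s).
  by move=> s i; rewrite /am /bm; case: ifP => _; [exact: va' | exact: va].
have step : forall s i, Phi (am s) (bm s) <= Phi (am (i :: s)) (bm (i :: s)).
  move=> s i; apply: (Phi_single (i0 := i)) => //.
  - by move=> j /negPf ne; rewrite /am /bm in_cons ne.
  - by rewrite /am in_cons eqxx /=; case: ifP.
  - by rewrite /bm in_cons eqxx /=; case: ifP.
have chain : forall s, Phi a b <= Phi (am s) (bm s).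
  elim => [|i s IH]; last exact: le_trans IH (step s i).
  have -> : am [::] = a by apply: FunctionalExtensionality.functional_extensionality.
  have -> : bm [::] = b by apply: FunctionalExtensionality.functional_extensionality.
  exact: lexx.
have -> : a' = am (enum I).
  by apply: FunctionalExtensionality.functional_extensionality => i; rewrite /am mem_enum.
have -> : b' = bm (enum I).
  by apply: FunctionalExtensionality.functional_extensionality => i; rewrite /bm mem_enum.
exact: chain.
Qed.
End Prob.

Lemma sum_pair (T1 T2 : finType) (R : nmodType) (f : T1 * T2 -> R) :
  \sum_(w : T1 * T2) f w = \sum_(x : T1) \sum_(y : T2) f (x, y).
Proof. by rewrite pair_big; apply: eq_bigr => -[]. Qed.

Lemma sum_omega (V : finType) (R : nmodType) (f : omega V -> R) :
  \sum_(w : omega V) f w = \sum_(L : {ffun V * V -> bool}) \sum_(Rg : {ffun V * bool -> 'I_3})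
     \sum_(Pi : {ffun V -> {perm V}}) \sum_(Tau : {ffun V -> bool}) f (L, Rg, Pi, Tau).
Proof.
rewrite (@sum_pair _ _ R f) (@sum_pair _ _ R (fun x => \sum_y f (x, y))).
by rewrite (@sum_pair _ _ R (fun x => \sum_y \sum_z f (x, y, z))).
Qed.

Theorem theorem10 (R : realFieldType) (V : finType) (E : rel V) (p : V -> V -> R)
  (hp : forall u v, E u v -> 0 <= p u v <= 1) (SA SB : {set V})
  (Q Q' : GAP R) (hQ : GAP_in01 Q) (hQ' : GAP_in01 Q')
  (hQp : Qplus Q) (hQp' : Qplus Q') (X c : bool)
  (hother : forall Y d, (Y, d) != (X, c) -> Q' Y d = Q Y d)
  (hle : Q X c <= Q' X c) :
  sigmaA E p Q SA SB <= sigmaA E p Q' SA SB.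
Proof.
pose a (Q0 : GAP R) := fun i : V * bool => Q0 i.2 false.
pose b (Q0 : GAP R) := fun i : V * bool => Q0 i.2 true.
pose A (L : {ffun V * V -> bool}) := \prod_(e : V * V)
     (if E e.1 e.2 then (if L e then p e.1 e.2 else 1 - p e.1 e.2)
      else (if L e then 0 else 1)).
pose K := (\prod_(v : V) ((#|V|`!)%:R)^-1) * (\prod_(v : V) (2:R)^-1).
pose Fc (L : {ffun V * V -> bool}) := fun (x y : V * bool -> bool) =>
  (#|lfpS (ell E (fun e => L e)) (fun v X => x (v, X)) (fun v X => y (v, X)) SA SB true|)%:R : R.
pose H (Q0 : GAP R) L (Rg : {ffun V * bool -> 'I_3}) := K * A L *
  ((\prod_i rw (a Q0 i) (b Q0 i) (Rg i)) * Fc L (decA Rg) (decB (a Q0) (b Q0) Rg)).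
have sigE : forall Q0 : GAP R, Qplus Q0 ->
    sigmaA E p Q0 SA SB = \sum_L \sum_Rg \sum_(Pi : {ffun V -> {perm V}})
                          \sum_(Tau : {ffun V -> bool}) H Q0 L Rg.
  move=> Q0 hQ0; rewrite /sigmaA sum_omega.
  apply: eq_bigr => L _; apply: eq_bigr => Rg _; apply: eq_bigr => Pi _;
    apply: eq_bigr => Tau _.
  rewrite /weight /final /H.
  have qle : forall Z, Q0 Z false <= Q0 Z true by case: hQ0 => h1 h2 [].
  have laE : forall v Z, alpha_le Q0 Z false (Rg (v, Z)) = decA Rg (v, Z).
    move=> v Z; rewrite /alpha_le /decA.
    have nlt : (Q0 Z true < Q0 Z false) = false by apply/negbTE; rewrite -leNgt qle.
    by rewrite nlt andbF orbF.
  have hl : forall v Z, la_ Q0 (fun v X => Rg (v, X)) v Z ->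
                        lb_ Q0 (fun v X => Rg (v, X)) v Z.
    move=> v Z; rewrite /la_ /lb_ /la /lb laE /decA /alpha_le => ->; by [].
  have FC := @final_char R V E (fun e => L e) (fun v => Pi v) Q0 (fun v X => Rg (v, X))
     SA SB (fun v => Tau v) hl true.
  rewrite /Ff /g_ /Nf in FC; rewrite -FC.
  have -> : la_ Q0 (fun v X => Rg (v, X)) = fun v Z => decA Rg (v, Z).
    apply: FunctionalExtensionality.functional_extensionality => v.
    apply: FunctionalExtensionality.functional_extensionality => Z.
    exact: laE.
  have -> : \prod_x region_w Q0 x.2 (Rg x) = \prod_i rw (a Q0 i) (b Q0 i) (Rg i) by [].
  rewrite /Fc /K /A /lb_ /lb /=.
  ring.
have Qmono : forall Y d, Q Y d <= Q' Y d.
  move=> Y d; case: (boolP ((Y, d) == (X, c))) => [/eqP [-> ->] //|ne].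
  by rewrite hother // lexx.
have valQ : forall Q0 : GAP R, GAP_in01 Q0 -> Qplus Q0 -> valid (a Q0) (b Q0).
  move=> Q0 h01 hq i; rewrite /a /b.
  case/andP: (h01 i.2 false) => h1 _; case/andP: (h01 i.2 true) => _ h2.
  split=> //; split=> //; case: hq => q1 q2; by case: i.2.
rewrite (sigE Q hQp) (sigE Q' hQp'); apply: ler_sum => L _.
rewrite exchange_big [X in _ <= X]exchange_big; apply: ler_sum => Pi _.
rewrite exchange_big [X in _ <= X]exchange_big; apply: ler_sum => Tau _.
rewrite /H -!mulr_sumr; apply: ler_wpM2l.
  apply: mulr_ge0; first apply: mulr_ge0.
  - by apply: prodr_ge0 => v _; rewrite invr_ge0 ler0n.
  - by apply: prodr_ge0 => v _; rewrite invr_ge0 ler0n.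
  apply: prodr_ge0 => e _; case Ee: (E e.1 e.2); case: (L e) => //.
    by case/andP: (hp _ _ Ee).
  by case/andP: (hp _ _ Ee) => _; rewrite subr_ge0.
apply: (@Phi_mono R _ (Fc L)).
- move=> x y x' y' hx hy; rewrite /Fc ler_nat; apply: subset_leq_card.
  by apply: lfp_mono => v Y; [apply: hx | apply: hy].
- exact: valQ.
- exact: valQ.
- by move=> i; apply: Qmono.
- by move=> i; apply: Qmono.
Qed.
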